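(* Let $n,k,r$ be integers with $k,r\geq 2$ and $n\geq k+r-1$. If $H$ is a vertex-$k$-maximal $r$-uniform hypergraph on $n$ vertices, then $\overline{\kappa}(H)=\kappa(H)=k$.
   Context: A hypergraph $H=(V,E)$ consists of a finite vertex set $V$ and a set $E$ of non-empty subsets of $V$ (edges). $H$ is $r$-uniform if every edge has exactly $r$ elements. $K_n^r$ denotes the complete $r$-uniform hypergraph on $n$ vertices (all $r$-subsets are edges; no edges if $n<r$). The complement $H^c$ of an $r$-uniform hypergraph $H=(V,E)$ is the $r$-uniform hypergraph on $V$ whose edges are the $r$-subsets of $V$ not in $E$. A subhypergraph of $H$ is $H'=(V',E')$ with $V'\subseteq V$, $E'\subseteq E$ (and edges of $E'$ contained in $V'$). For an $r$-subset $e\in E(H^c)$, $H+e=(V,E\cup\{e\})$. For $Y\subseteq V$, $H[Y]$ is the induced hypergraph with vertex set $Y$ and edges $\{e\in E: e\subseteq Y\}$, and $H-Y=H[V\setminus Y]$. A path is an alternating sequence $v_1,e_1,v_2,\dots,e_s,v_{s+1}$ of distinct vertices and distinct edges with $v_i,v_{i+1}\in e_i$; $H$ is connected if any two vertices are joined by a path. A vertex-cut is a set $X\subseteq V$ with $H-X$ disconnected. The vertex-connectivity $\kappa(H)$ is the minimum size of a vertex-cut if $H$ has one, and $|V(H)|-1$ otherwise. $\overline{\kappa}(H)=\max\{\kappa(H'): H'\text{ a subhypergraph of }H\}$. An $r$-uniform hypergraph $H$ is vertex-$k$-maximal if $\overline{\kappa}(H)\leq k$ but $\overline{\kappa}(H+e)\geq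 k+1$ for every $e\in E(H^c)$. *)

(* Defs.v *)
From mathcomp Require Import all_boot.
From Stdlib Require Import ClassicalEpsilon.
Set Implicit Arguments. Unset Strict Implicit. Unset Printing Implicit Defensive.

Definition hypergraph (T : finType) := ({set T} * {set {set T}})%type.

Section Hyper.
Variable T : finType.
Implicit Types (H : hypergraph T) (X Y : {set T}) (e : {set T}).

Definition vtx H := H.1.
Definition edg H := H.2.

Definition wf_hypergraph H :=
  forall e, e \in edg H -> e != set0 /\ e \subset vtx H.

Definition r_uniform (r : nat) H := forall e, e \in edg H -> #|e| = r.

Definition subhypergraph (H' H : hypergraph T) : bool :=
  [&& vtx H' \subset vtx H, edg H' \subset edg H &
      [forall e in edg H', e \subset vtx H']].

Definition compl_edge (r : nat) H e : bool :=
  [&& e \subset vtx H, #|e| == r & e \notin edg H].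

Definition add_edge H e : hypergraph T := (vtx H, edg H :|: [set e]).

Definition induced H Y : hypergraph T := (Y, [set e in edg H | e \subset Y]).
Definition del_vertices H X : hypergraph T := induced H (vtx H :\: X).

Definition hpath H (x y : T) : Prop :=
  exists (vs : seq T) (es : seq {set T}),
    [/\ size vs = (size es).+1, uniq vs, uniq es,
        (nth x vs 0 = x /\ last x vs = y) /\ {subset es <= edg H} &
        forall i, i < size es ->
          nth x vs i \in nth set0 es i /\ nth x vs i.+1 \in nth set0 es i].

Definition hconnected H : Prop :=
  forall x y, x \in vtx H -> y \in vtx H -> hpath H x y.

Definition hconnectedb H : bool :=
  if excluded_middle_informative (hconnected H) then true else false.

Definition vertex_cut H X : bool :=
  (X \subset vtx H) && ~~ hconnectedb (del_vertices H X).

(* kappa(H): min size of a vertex-cut if one exists, else |V|-1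
   (truncated at 0 when V is empty) *)
Definition kappa H : nat :=
  if [exists X, vertex_cut H X]
  then \big[minn/#|vtx H|]_(X | vertex_cut H X) #|X|
  else #|vtx H|.-1.

Definition kappa_bar H : nat :=
  \max_(H' : hypergraph T | subhypergraph H' H) kappa H'.

Definition vertex_k_maximal (r k : nat) H : Prop :=
  kappa_bar H <= k /\
  forall e, compl_edge r H e -> k.+1 <= kappa_bar (add_edge H e).

End Hyper.

(* Main.v *)
Require Import Defs.
From mathcomp Require Import all_boot zify.
From Stdlib Require Import Classical ClassicalEpsilon.
Set Implicit Arguments. Unset Strict Implicit. Unset Printing Implicit Defensive.

Section Paths.
Variable T : finType.
Implicit Types (H : hypergraph T) (E : {set {set T}}).

Definition ispath E (x y : T) (vs : seq T) (es : seq {set T}) :=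
    [/\ size vs = (size es).+1, uniq vs, uniq es,
        (nth x vs 0 = x /\ last x vs = y) /\ {subset es <= E} &
        forall i, i < size es ->
          nth x vs i \in nth set0 es i /\ nth x vs i.+1 \in nth set0 es i].

Lemma hpathE H x y : hpath H x y <-> exists vs es, ispath (edg H) x y vs es.
Proof. by []. Qed.

Lemma ispath_refl E x : ispath E x x [:: x] [::].
Proof. by split => //; split. Qed.

Lemma ispath_take E x y vs es j : ispath E x y vs es -> j < size vs ->
  ispath E x (nth x vs j) (take j.+1 vs) (take j es).
Proof.
move=> [Hs Hu Hue [[H0 Hl] Hsub] Hi] Hj.
have Hjs : j <= size es by rewrite -ltnS -Hs.
split.
- by rewrite !size_take Hs ltnS; case: ltngtP Hjs => //; move=> ->.
- exact: take_uniq.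
- exact: take_uniq.
- split; last by move=> f /mem_take /Hsub.
  split; first by rewrite nth_take.
  rewrite -nth_last size_take.
  have -> : (if j.+1 < size vs then j.+1 else size vs) = j.+1.
    by case: ifP => // /negbT; rewrite -leqNgt => h; apply/eqP; rewrite eqn_leq h Hj.
  by rewrite /= nth_take.
- move=> i; rewrite size_take.
  have Hij : (if j < size es then j else size es) = j.
    by case: ifP => // /negbT; rewrite -leqNgt => h; apply/eqP; rewrite eqn_leq h Hjs.
  rewrite Hij => hi.
  rewrite !nth_take //; last by apply: leq_trans hi _.
  by apply: Hi; apply: leq_trans hi Hjs.
Qed.

Lemma ispath_rcons E x y vs es f z : ispath E x y vs es ->
  f \in E -> y \in f -> z \in f -> z \notin vs -> f \notin es ->
  ispath E x z (rcons vs z) (rcons es f).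
Proof.
move=> [Hs Hu Hue [[H0 Hl] Hsub] Hi] fE yf zf zv fe.
split.
- by rewrite !size_rcons Hs.
- by rewrite rcons_uniq zv.
- by rewrite rcons_uniq fe.
- split; last by move=> g; rewrite mem_rcons inE => /orP [/eqP -> //|/Hsub].
  split; last by rewrite last_rcons.
  by rewrite nth_rcons Hs.
- move=> i; rewrite size_rcons ltnS leq_eqVlt => /orP [/eqP ->|hi].
  + rewrite !nth_rcons Hs ltnn eqxx ltnSn.
    split; last by rewrite ltnn eqxx.
    have -> : size es = (size vs).-1 by rewrite Hs.
    by rewrite nth_last Hl.
  + rewrite !nth_rcons Hs hi (leq_trans hi (leqnSn _)) ltnS hi.
    exact: Hi.
Qed.

Lemma ispath_ext E x y vs es f z : ispath E x y vs es ->
  f \in E -> y \in f -> z \in f -> exists vs' es', ispath E x z vs' es'.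
Proof.
move=> P fE yf zf.
have [zv|zv] := boolP (z \in vs).
  exists (take (index z vs).+1 vs), (take (index z vs) es).
  have := ispath_take P (j:=index z vs); rewrite nth_index //.
  by apply; rewrite index_mem.
have [fe|fe] := boolP (f \in es); last first.
  by exists (rcons vs z), (rcons es f); exact: (ispath_rcons P fE yf zf zv fe).
set i := index f es.
have ilt : i < size es by rewrite index_mem.
case: (P) => Hs _ _ _ Hi.
have ilv : i < size vs by rewrite Hs ltnW.
have P' := ispath_take P ilv.
exists (rcons (take i.+1 vs) z), (rcons (take i es) f).
apply: (ispath_rcons P') => //.
- by move: (Hi i ilt).1; rewrite /i nth_index.
- by apply: contra zv => /mem_take.
- by apply/negP => /index_ltn; rewrite ltnn.
Qed.

Lemma hpath_trans H x y z : hpath H x y -> hpath H y z -> hpath H x z.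
Proof.
move=> Hxy [vs [es [Hs _ _ [[H0 Hl] Hsub] Hi]]].
suff: forall i, i <= size es -> hpath H x (nth y vs i).
  by move/(_ _ (leqnn _)); rewrite -[size es]/((size es).+1.-1) -Hs nth_last Hl.
elim=> [_|i IH hi]; first by rewrite H0.
have [Ha Hb] := Hi i hi.
have [vs' [es' P]] := IH (ltnW hi).
apply: ispath_ext P _ Ha Hb.
by apply: Hsub; rewrite mem_nth.
Qed.

Lemma hpath_refl H x : hpath H x x.
Proof. by exists [:: x], [::]; apply: ispath_refl. Qed.

Lemma hpath_edge H x y f : f \in edg H -> x \in f -> y \in f -> hpath H x y.
Proof.
move=> fE xf yf.
have [vs [es P]] := ispath_ext (ispath_refl (edg H) x) fE xf yf.
by exists vs, es.
Qed.

Lemma hpath_mono H1 H2 x y : {subset edg H1 <= edg H2} -> hpath H1 x y -> hpath H2 x y.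
Proof.
move=> S [vs [es [Hs Hu Hue [[H0 Hl] Hsub] Hi]]].
exists vs, es; split => //; split => //.
by move=> f /Hsub /S.
Qed.

End Paths.

Section K.
Variable T : finType.
Implicit Types (H : hypergraph T) (E : {set {set T}}).

Lemma hconnectedbP H : hconnectedb H <-> hconnected H.
Proof. by rewrite /hconnectedb; case: excluded_middle_informative. Qed.

Lemma not_hconnected H : ~ hconnected H ->
  exists x y, [/\ x \in vtx H, y \in vtx H & ~ hpath H x y].
Proof.
move=> nH; apply: NNPP => C; apply: nH => x y hx hy.
apply: NNPP => np; apply: C; by exists x, y.
Qed.

Lemma cut_intro H (Y : {set T}) (x y : T) : Y \subset vtx H -> x \in vtx H :\: Y -> y \in vtx H :\: Y ->
  ~ hpath (del_vertices H Y) x y -> vertex_cut H Y.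
Proof.
move=> sY hx hy np; rewrite /vertex_cut sY /=.
apply/negP => /hconnectedbP C; apply: np; exact: C.
Qed.

Lemma bigmin_le (I : eqType) (s : seq I) (P : pred I) (F : I -> nat) x0 y :
  y \in s -> P y -> \big[minn/x0]_(i <- s | P i) F i <= F y.
Proof.
elim: s => // a s IH; rewrite inE big_cons => /orP [/eqP <- -> |ys Py].
  exact: geq_minl.
case: ifP => _; last exact: IH.
by rewrite (leq_trans (geq_minr _ _)) // IH.
Qed.

Lemma kappa_le_cut H Y : vertex_cut H Y -> kappa H <= #|Y|.
Proof.
move=> cY; rewrite /kappa.
have -> : [exists X, vertex_cut H X] by apply/existsP; exists Y.
by apply: bigmin_le => //; rewrite mem_index_enum.
Qed.

Lemma cut_card H Y : vertex_cut H Y -> #|Y| <= #|vtx H| - 2.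
Proof.
move=> /andP [sY nc].
have nC : ~ hconnected (del_vertices H Y) by move=> /hconnectedbP C; rewrite C in nc.
have [x [y [hx hy np]]] := not_hconnected nC.
have xy : x != y by apply/eqP => e; apply: np; rewrite e; apply: hpath_refl.
have : #|[set x; y]| <= #|vtx H :\: Y|.
  apply: subset_leq_card; apply/subsetP => z; rewrite !inE.
  by case/orP => /eqP ->; [move: hx | move: hy]; rewrite /= !inE.
rewrite cards2 xy cardsDS //; lia.
Qed.

Lemma kappa_le_card H : kappa H <= #|vtx H|.-1.
Proof.
rewrite /kappa; case: ifP => // /existsP [Y cY].
rewrite (leq_trans (bigmin_le (fun X : {set T} => #|X|) #|vtx H| (mem_index_enum Y) cY)) //.
have := cut_card cY; lia.
Qed.

Lemma extend_set (D : {set T}) m : forall S : {set T}, S \subset D -> #|S| <= m -> m <= #|D| ->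
  exists e : {set T}, [/\ S \subset e, e \subset D & #|e| = m].
Proof.
move=> S; move Hd : (m - #|S|) => d; elim: d S Hd => [|d IH] S Hd sS hS hD.
  by exists S; split => //; apply/eqP; rewrite eqn_leq hS -subn_eq0 Hd.
have : S \proper D.
  rewrite properEcard sS /=; lia.
case/properP => _ [x xD xS].
have h1 : m - #|x |: S| = d by rewrite cardsU1 xS; lia.
have h2 : x |: S \subset D by rewrite subUset sub1set xD.
have h3 : #|x |: S| <= m by rewrite cardsU1 xS; lia.
have [e [s1 s2 s3]] := IH (x |: S) h1 h2 h3 hD.
exists e; split => //; apply: subset_trans s1; exact: subsetUr.
Qed.

End K.

Theorem lemma2p1 (n k r : nat) (E : {set {set 'I_n}}) :
  2 <= k -> 2 <= r -> k + r - 1 <= n ->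
  wf_hypergraph ((setT, E) : hypergraph 'I_n) ->
  r_uniform r ((setT, E) : hypergraph 'I_n) ->
  vertex_k_maximal r k ((setT, E) : hypergraph 'I_n) ->
  kappa_bar ((setT, E) : hypergraph 'I_n) = k /\
  kappa ((setT, E) : hypergraph 'I_n) = k.
Proof.
move=> k2 r2 hn _ _ [kb Hmax].
set H := ((setT, E) : hypergraph 'I_n).
have cardV : #|vtx H| = n by rewrite /= cardsT card_ord.
have kH_le : kappa H <= kappa_bar H.
  apply: (leq_bigmax_cond H).
  by rewrite /subhypergraph !subxx /=; apply/forall_inP => f _; apply: subsetT.
suff kge : k <= kappa H by split; [apply/eqP; rewrite eqn_leq kb (leq_trans kge kH_le) | apply/eqP; rewrite eqn_leq kge (leq_trans kH_le kb)].
have cut_ge : forall X, vertex_cut H X -> k <= #|X|.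
  move=> X /andP [_ nc]; rewrite leqNgt; apply/negP => ltX.
  have nC : ~ hconnected (del_vertices H X) by move=> /hconnectedbP C; rewrite C in nc.
  have [a [b [ha hb np]]] := not_hconnected nC.
  set D := [set: 'I_n] :\: X.
  have aD : a \in D by exact: ha.
  have bD : b \in D by exact: hb.
  have ab : a != b by apply/eqP => e; apply: np; rewrite e; apply: hpath_refl.
  have cD : #|D| = n - #|X| by rewrite cardsDS ?subsetT // cardsT card_ord.
  have sab : [set a; b] \subset D.
    by apply/subsetP => z /set2P [->|->].
  have h1 : #|[set a; b]| <= r by rewrite cards2 ab.
  have h2 : r <= #|D| by rewrite cD; lia.
  have [e [Se eD ce]] := extend_set sab h1 h2.
  have aE : a \in e by apply: (subsetP Se); rewrite !inE eqxx.
  have bE : b \in e by apply: (subsetP Se); rewrite !inE eqxx orbT.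
  have eE : e \notin E.
    apply/negP => eE; apply: np; apply: (hpath_edge (f := e)) => //.
    by rewrite /= inE eE eD.
  have ce' : compl_edge r H e by rewrite /compl_edge subsetT ce eqxx eE.
  have kb' := Hmax e ce'.
  have [H' sH' kH'] : exists2 H', subhypergraph H' (add_edge H e) & k < kappa H'.
    apply: NNPP => C; move: kb'; rewrite ltnNge => /negP; apply.
    apply/bigmax_leqP => H' sH'; rewrite leqNgt; apply/negP => h; apply: C; by exists H'.
  case: H' sH' kH' => V' E' /and3P [sV sE sf] kH'.
  have sf' := forall_inP sf.
  have [eE'|eE'] := boolP (e \in E'); last first.
    have sH : subhypergraph (V', E') H.
      rewrite /subhypergraph sf andbT subsetT /=.
      apply/subsetP => f fE'; have := subsetP sE f fE'; rewrite !inE => /orP [//|/eqP fe].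
      by rewrite -fe fE' in eE'.
    have := @leq_bigmax_cond _ (fun H0 => subhypergraph H0 H) (fun H0 => kappa H0) _ sH.
    move=> h; have := leq_trans h kb; by rewrite leqNgt kH'.
  have eV' : e \subset V' := sf' e eE'.
  have key : forall w p q, w \in e -> p \in V' -> q \in V' -> p \notin X -> q \notin X ->
      p != w -> q != w -> ~ hpath (del_vertices H X) p q -> False.
    move=> w p q we pV qV pX qX pw qw npq.
    set Y := (X :&: V') :|: [set w].
    have sY : Y \subset V' by rewrite subUset subsetIr sub1set (subsetP eV').
    have cY : vertex_cut (V', E') Y.
      apply: (cut_intro (x := p) (y := q)) => //.
      - by rewrite /= !inE negb_or negb_and pX pw pV.
      - by rewrite /= !inE negb_or negb_and qX qw qV.
      - move=> hp; apply: npq; apply: (hpath_mono _ hp).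
        move=> f; rewrite /= !inE => /andP [fE' fsub].
        have := subsetP sE f fE'; rewrite !inE => /orP [fE|/eqP fe].
          rewrite fE /=; apply/subsetP => z zf.
          have := subsetP fsub z zf; rewrite !inE negb_or negb_and => /andP [/andP [hz1 _] zV].
          by move: hz1; rewrite zV orbF andbT.
        have := subsetP fsub w; rewrite fe => /(_ we).
        by rewrite !inE eqxx orbT.
    have hX : #|X :&: V'| <= #|X| by apply: subset_leq_card; apply: subsetIl.
    have hY : #|Y| <= #|X| + 1.
      apply: leq_trans (leq_addr #|(X :&: V') :&: [set w]| _) _.
      by rewrite cardsUI cards1 leq_add2r.
    have h3 : kappa (V', E') <= k.
      by apply: leq_trans (kappa_le_cut cY) (leq_trans hY _); rewrite addn1.
    by move: kH'; rewrite ltnNge h3.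
  have aV : a \in V' by apply: (subsetP eV').
  have bV : b \in V' by apply: (subsetP eV').
  have aX : a \notin X by move: aD; rewrite !inE => /andP [].
  have bX : b \notin X by move: bD; rewrite !inE => /andP [].
  case: (pickP [pred c | (c \in V') && (c \notin X) && (c != a) && (c != b)]) => [c|none].
    move=> /= /andP [/andP [/andP [cV cX] ca] cb].
    have [hac|hac] := classic (hpath (del_vertices H X) a c).
      apply: (key a c b) => //; first by rewrite eq_sym.
      by move=> hcb; apply: np; apply: hpath_trans hac hcb.
    by apply: (key b a c).
  have sV' : V' \subset X :|: [set a; b].
    apply/subsetP => z zV; have := none z; rewrite /= zV /= !inE.
    by case: (z \in X) => //=; case: (z == a) => //=; case: (z == b).
  have hV : #|V'| <= #|X| + 2.
    apply: leq_trans (subset_leq_card sV') _.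
    apply: leq_trans (leq_addr #|X :&: [set a; b]| _) _.
    by rewrite cardsUI cards2 ab.
  have h3 : kappa (V', E') <= k.
    apply: leq_trans (kappa_le_card (V', E')) _; rewrite /=. move: ltX => hX2.
    have h4 : #|X| + 2 <= k + 1 by rewrite addn2 -addn1 leq_add2r. 
    by rewrite -subn1 leq_subLR add1n -addn1 (leq_trans hV h4).
  by move: kH'; rewrite ltnNge h3.
rewrite /kappa; case: ifP => _; last by rewrite cardV; lia.
apply: (big_ind (fun m => k <= m)).
- rewrite cardV; lia.
- by move=> x y hx hy; rewrite leq_min hx hy.
- exact: cut_ge.
Qed.
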